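(* Let $A$ be an integral domain with fraction field $K$ and spectrum $S$. Let $F \in A[Y]$ be a nonconstant polynomial, and put $X_F = \mathrm{Spec}(A[Y]/(F))$. (1) For a prime ideal $\mathfrak p$ of $A$, the following are equivalent: (i) $\mathfrak p \in \mathrm{Rel}(X_F/S)$; (ii) the image of $F$ in $\kappa(\mathfrak p)[Y]$ has a root in $\kappa(\mathfrak p)$; (iii) there exist $g \in A \setminus \mathfrak p$ and $b \in A_g$ such that $F(b) \in \mathfrak p A_{\mathfrak p}$. (2) The following are equivalent: (i) $\mathrm{Rel}(X_F/S)$ is dense in $S$; (ii) for every nonzero $g \in A$, there exist $u \in A$ and $b \in A_{ug}$ such that $F(b) \notin A_{ug}^\times$; (iii) for every nonzero $g \in A$, there exist $u \in A$, $b \in A_{ug}$ and $\mathfrak p \in D(ug)$ such that $F(b) \in \mathfrak p A_{\mathfrak p}$.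
   Context: For a morphism $f : X \to S$, $\mathrm{Rel}(f)$ (also written $\mathrm{Rel}(X/S)$) is the set of $f(x)$, $x \in X$, such that $\kappa(f(x)) = \kappa(x)$ (trivial residue field extension). For $t \in A$, $A_t$ is the localization at the powers of $t$, and $D(t) = \mathrm{Spec}(A_t) \subset \mathrm{Spec}(A)$. *)

(* Defs.v *)
From HB Require Import structures.
From mathcomp Require Import all_boot all_algebra.
From mathcomp Require Import boolp.
From mathcomp Require Export ring_quotient fraction generic_quotient.

Set Implicit Arguments.
Unset Strict Implicit.
Unset Printing Implicit Defensive.

Import GRing.Theory.
Local Open Scope ring_scope.
Local Open Scope quotient_scope.

Notation tofrac := (@FracField.tofrac _).
Notation "x %:F" := (@FracField.tofrac _ x) (format "x %:F").

(* Quotient R/I by a prime ideal as an integral domain (so that its    *)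
(* fraction field, the residue field kappa(I), can be formed).         *)
Section PrimeQuotientDomain.
Variables (R : comNzRingType) (I : prime_idealr R).

Definition pquot := {ideal_quot I}.
HB.instance Definition _ := GRing.ComNzRing.on pquot.

Definition pq_unit : {pred pquot} := fun x => `[< exists y : pquot, y * x = 1 >].
Definition pq_inv (x : pquot) : pquot :=
  match pselect (exists y : pquot, y * x = 1) with
  | left h => projT1 (cid h)
  | right _ => x
  end.

Lemma pq_mulVx : {in pq_unit, left_inverse 1 pq_inv *%R}.
Proof.
move=> x /asboolP hx; rewrite /pq_inv; case: pselect => // h.
by case: (cid h).
Qed.

Lemma pq_unitPl : forall x y : pquot, y * x = 1 -> pq_unit x.
Proof. by move=> x y h; apply/asboolP; exists y. Qed.

Lemma pq_invr_out : {in [predC pq_unit], pq_inv =1 id}.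
Proof.
move=> x; rewrite inE => /asboolPn hx; rewrite /pq_inv.
by case: pselect.
Qed.

HB.instance Definition _ :=
  GRing.ComNzRing_hasMulInverse.Build pquot pq_mulVx pq_unitPl pq_invr_out.

Lemma pq_integral : GRing.integral_domain_axiom pquot.
Proof. move=> x y; exact: Quotient.rquot_IdomainAxiom. Qed.

HB.instance Definition _ := GRing.ComUnitRing_isIntegral.Build pquot pq_integral.

Definition kappa := {fraction pquot}.

Definition to_kappa (a : R) : kappa := @FracField.tofrac pquot (\pi_({ideal_quot I}) a).

End PrimeQuotientDomain.

(* Points of X_F = Spec(A[Y]/(F)) are the primes q of A[Y] with F in q;*)
(* the structure map sends q to its contraction q ∩ A.                 *)
Section Rel.
Variable A : idomainType.

Definition lies_over (q : prime_idealr {poly A}) (p : prime_idealr A) : Prop :=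
  forall a : A, (a%:P \in q) = (a \in p).

Definition trivial_residue_ext (q : prime_idealr {poly A}) (p : prime_idealr A)
  : Prop :=
  forall z : kappa q, exists a s : A,
    s \notin p /\ z = to_kappa q a%:P / to_kappa q s%:P.

Definition Rel (F : {poly A}) (p : prime_idealr A) : Prop :=
  exists q : prime_idealr {poly A},
    [/\ F \in q, lies_over q p & trivial_residue_ext q p].

Definition res_has_root (F : {poly A}) (p : prime_idealr A) : Prop :=
  exists x : kappa p, root (map_poly (to_kappa p) F) x.

(* Zariski topology on S: the open set S \ V(E) for E ⊆ A *)
Definition zopen (E : A -> Prop) (p : prime_idealr A) : Prop :=
  exists e, E e /\ e \notin p.

Definition zdense (P : prime_idealr A -> Prop) : Prop :=
  forall E : A -> Prop, (exists p, zopen E p) -> exists p, zopen E p /\ P p.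

(* Localizations are realised inside the fraction field K = {fraction A}. *)
Local Notation K := {fraction A}.

(* For t = 0, A_0 is the zero
   ring, which does not embed in K; we then declare nothing to be in A_0
   (the clauses of the theorem using A_{ug} are false for
   ug = 0 in the original statement as well). *)
Definition in_loc (t : A) (b : K) : Prop :=
  t != 0 /\ exists (a : A) (n : nat), b = a%:F / (t ^+ n)%:F.

Definition loc_unit (t : A) (x : K) : Prop :=
  in_loc t x /\ exists y, in_loc t y /\ x * y = 1.

Definition in_pAp (p : prime_idealr A) (x : K) : Prop :=
  exists a s : A, [/\ a \in p, s \notin p & x = a%:F / s%:F].

Definition evalK (F : {poly A}) (b : K) : K := (map_poly (@FracField.tofrac A) F).[b].

End Rel.

(* Main.v *)
Require Import Defs.
From HB Require Import structures.
From mathcomp Require Import all_boot all_algebra.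
From mathcomp Require Import boolp.
From mathcomp Require classical_sets.
From mathcomp Require Import ring.
Set Implicit Arguments.
Unset Strict Implicit.
Unset Printing Implicit Defensive.
Import GRing.Theory.
Local Open Scope ring_scope.
Local Open Scope quotient_scope.

Lemma frac_repr (R : idomainType) (x : {fraction R}) :
  exists a b : R, b != 0 /\ x = a%:F / b%:F.
Proof.
rewrite -[x]reprK; set r := repr x.
exists (\n_r). exists (\d_r). apply: conj. exact: denom_ratioP.
have hd : (\d_r)%:F != 0 :> {fraction R} by rewrite tofrac_eq0; exact: denom_ratioP.
apply: (mulIf hd). rewrite mulfVK //.
unlock FracField.tofrac.
rewrite -[_ * _]FracField.pi_mul; apply/eqmodP => /=.
rewrite FracField.equivfE /FracField.mulf /=.
rewrite !numden_Ratio ?oner_neq0 ?mulf_neq0 ?oner_neq0 ?denom_ratioP //.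
by rewrite !mulr1 mulrC.
Qed.

Section Kappa.
Variables (R : comNzRingType) (I : prime_idealr R).

Lemma to_kappa_zmod : zmod_morphism (to_kappa I).
Proof. by move=> x y; rewrite /to_kappa rmorphB rmorphB. Qed.
HB.instance Definition _ := GRing.isZmodMorphism.Build R (kappa I) (to_kappa I) to_kappa_zmod.
Lemma to_kappa_monoid : monoid_morphism (to_kappa I).
Proof. by split=> [|x y]; rewrite /to_kappa ?rmorph1 ?rmorphM ?rmorph1 ?rmorphM. Qed.
HB.instance Definition _ := GRing.isMonoidMorphism.Build R (kappa I) (to_kappa I) to_kappa_monoid.

Lemma to_kappa_eq0 a : (to_kappa I a == 0) = (a \in I).
Proof.
rewrite /to_kappa tofrac_eq0 -(rmorph0 (\pi_(pquot I))). 
by rewrite -Quotient.idealrBE subr0.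
Qed.

Lemma pquot_surj (z : pquot I) : exists a, z = \pi_(pquot I) a.
Proof. by exists (repr z); rewrite reprK. Qed.

Lemma kappa_repr (z : kappa I) : exists a s, s \notin I /\ z = to_kappa I a / to_kappa I s.
Proof.
have [x [y [y0 ->]]] := frac_repr z.
have [a ->] := pquot_surj x; have [s sE] := pquot_surj y; rewrite sE in y0 *.
exists a, s; split => //.
by rewrite -to_kappa_eq0 /to_kappa tofrac_eq0.
Qed.
End Kappa.
Definition homz (R : comNzRingType) (F : {poly R}) (a s : R) : R :=
  \sum_(i < size F) F`_i * a ^+ i * s ^+ ((size F).-1 - i).

Lemma size_map_le (aR rR : nzSemiRingType) (f : aR -> rR) (p : {poly aR}) :
  (size (map_poly f p) <= size p)%N.
Proof. exact: size_poly. Qed.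

Lemma homzE (R : comNzRingType) (L : fieldType) (f : {rmorphism R -> L})
  (F : {poly R}) (a s : R) : f s != 0 ->
  (map_poly f F).[f a / f s] * f s ^+ (size F).-1 = f (homz F a s).
Proof.
move=> s0.
rewrite (horner_coef_wide _ (size_map_le f F)) mulr_suml /homz rmorph_sum.
apply: eq_bigr => [[i hi]] _ /=.
rewrite coef_map rmorphM rmorphM rmorphXn rmorphXn exprMn -!mulrA.
congr (_ * (_ * _)).
have hi' : (i <= (size F).-1)%N by rewrite -ltnS prednK // (leq_ltn_trans _ hi).
rewrite exprVn -{1}(subnK hi') exprD mulrC mulfK //.
by rewrite expf_neq0.
Qed.

Lemma rmorph_polyE (R : comNzRingType) (L : comNzRingType)
  (phi : {rmorphism {poly R} -> L}) (psi : {rmorphism R -> L})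
  (hpsi : forall c, psi c = phi c%:P) (P : {poly R}) :
  phi P = (map_poly psi P).[phi 'X].
Proof.
elim/poly_ind: P => [|P c IH]; first by rewrite rmorph0 map_poly0 horner0.
rewrite rmorphD rmorphM IH rmorphD rmorphM /= map_polyX map_polyC hornerMXaddC.
by rewrite -hpsi.
Qed.
Record ideal_props (R : comNzRingType) (P : R -> Prop) : Prop := IdealProps {
  ip0 : P 0; ip1 : ~ P 1; ipD : forall x y, P x -> P y -> P (x + y);
  ipM : forall a x, P x -> P (a * x); ipP : forall x y, P (x * y) -> P x \/ P y }.

Definition mkpred (R : comNzRingType) (P : R -> Prop) (h : ideal_props P) : {pred R} :=
  fun x => `[< P x >].

Section MkPrime.
Variables (R : comNzRingType) (P : R -> Prop) (h : ideal_props P).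

Lemma mkpredE x : (x \in mkpred h) = `[< P x >].
Proof. by []. Qed.

Lemma mkpred_closed : idealr_closed (mkpred h).
Proof.
split; rewrite ?mkpredE; first by apply/asboolP; exact: ip0 h.
  by apply/asboolP; exact: ip1 h.
move=> a u v; rewrite !mkpredE => /asboolP hu /asboolP hv; apply/asboolP.
by apply: (ipD h) => //; apply: (ipM h).
Qed.

HB.instance Definition _ := isIdealr.Build R (mkpred h) mkpred_closed.

Lemma mkpred_prime : prime_idealr_closed (mkpred h).
Proof.
move=> u v; rewrite !mkpredE => /asboolP/(ipP h) [] hh; apply/orP; [left|right]; exact/asboolP.
Qed.

HB.instance Definition _ := isPrimeIdealrClosed.Build R (mkpred h) mkpred_prime.

Definition mkprime : prime_idealr R := PrimeIdealr.clone R (mkpred h) _.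

Lemma mkprimeE x : (x \in mkprime) = `[< P x >].
Proof. by []. Qed.
End MkPrime.

Lemma ker_props (R : comNzRingType) (L : idomainType) (f : {rmorphism R -> L}) :
  ideal_props (fun x => f x = 0).
Proof.
split.
- exact: rmorph0.
- by rewrite rmorph1; apply/eqP; exact: oner_neq0.
- by move=> x y hx hy; rewrite rmorphD hx hy addr0.
- by move=> a x hx; rewrite rmorphM hx mulr0.
- by move=> x y; rewrite rmorphM => /eqP; rewrite mulf_eq0 => /orP [] /eqP; [left|right].
Qed.

Lemma prime_notin_exp (R : comNzRingType) (p : prime_idealr R) (s : R) n :
  s \notin p -> s ^+ n \notin p.
Proof.
move=> hs; elim: n => [|n IH]; first by rewrite expr0 idealr1.
by rewrite exprS prime_idealrM negb_or hs IH.
Qed.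

Lemma prime_notin_mul (R : comNzRingType) (p : prime_idealr R) (s t : R) :
  s \notin p -> t \notin p -> s * t \notin p.
Proof. by move=> hs ht; rewrite prime_idealrM negb_or hs ht. Qed.

Lemma notin_neq0 (R : comNzRingType) (p : prime_idealr R) (s : R) :
  s \notin p -> s != 0.
Proof. by apply: contra => /eqP ->; exact: idealr0. Qed.

Section Part1.
Variables (A : idomainType) (F : {poly A}) (p : prime_idealr A).

Definition P1 := exists a s : A, s \notin p /\ homz F a s \in p.

Lemma root_P1 : res_has_root F p <-> P1.
Proof.
split.
  move=> [x hx]; have [a [s [hs xE]]] := kappa_repr x; rewrite xE in hx.
  have s0 : to_kappa p s != 0 by rewrite to_kappa_eq0.
  exists a, s; split; first exact: hs. rewrite -to_kappa_eq0 -(homzE F a s0).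
  by move: hx => /rootP ->; rewrite mul0r.
move=> [a [s [hs hh]]].
have s0 : to_kappa p s != 0 by rewrite to_kappa_eq0.
exists (to_kappa p a / to_kappa p s); apply/rootP.
have E : (map_poly (to_kappa p) F).[to_kappa p a / to_kappa p s] * to_kappa p s ^+ (size F).-1
   = to_kappa p (homz F a s) := homzE F a s0.
move: hh; rewrite -to_kappa_eq0 -E => /eqP.
by move/eqP; rewrite mulf_eq0 expf_eq0 (negPf s0) andbF orbF => /eqP.
Qed.

Local Notation K := {fraction A}.

Lemma evalK_homz (a s : A) : s != 0 ->
  evalK F (a%:F / s%:F) = (homz F a s)%:F / (s ^+ (size F).-1)%:F.
Proof.
move=> s0; have s0' : s%:F != 0 :> K by rewrite tofrac_eq0.
have E : (map_poly (@FracField.tofrac A) F).[a%:F / s%:F] * s%:F ^+ (size F).-1 = (homz F a s)%:F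
  := homzE F a s0'.
by rewrite /evalK -E rmorphXn mulfK // expf_neq0.
Qed.

Lemma P1_iii : P1 <-> exists g : A, g \notin p /\
           exists b : {fraction A}, in_loc g b /\ in_pAp p (evalK F b).
Proof.
split.
  move=> [a [s [hs hh]]]; have s0 := notin_neq0 hs.
  exists s; split => //; exists (a%:F / s%:F); split.
    by split => //; exists a, 1%N; rewrite expr1.
  rewrite evalK_homz //; exists (homz F a s), (s ^+ (size F).-1); split => //.
  exact: prime_notin_exp.
move=> [g [hg [b [[g0 [a [n ->]]] [c [t [hc ht hE]]]]]]].
have hs : g ^+ n \notin p by exact: prime_notin_exp.
have s0 := notin_neq0 hs; have t0 := notin_neq0 ht.
exists a, (g ^+ n); split => //.
move: hE; rewrite evalK_homz // => /eqP.
rewrite eqr_div ?tofrac_eq0 ?expf_neq0 // -!rmorphM tofrac_eq => /eqP E.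
have : homz F a (g ^+ n) * t \in p by rewrite E mulrC idealMr.
by rewrite prime_idealrM (negPf ht) orbF.
Qed.

Lemma phiq_eval (q : prime_idealr {poly A}) (P : {poly A}) :
  to_kappa q P = (map_poly (to_kappa q \o polyC) P).[to_kappa q 'X].
Proof. exact: (@rmorph_polyE _ _ (to_kappa q) (to_kappa q \o polyC) (fun c => erefl) P). Qed.

Lemma psi_eq0 (q : prime_idealr {poly A}) (c : A) : lies_over q p ->
  ((to_kappa q \o polyC) c == 0) = (c \in p).
Proof. by move=> lo; rewrite /= to_kappa_eq0 lo. Qed.

Lemma phiq_homz (q : prime_idealr {poly A}) (a s : A) (P : {poly A}) :
  lies_over q p -> s \notin p ->
  to_kappa q 'X = (to_kappa q \o polyC) a / (to_kappa q \o polyC) s ->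
  to_kappa q P = (to_kappa q \o polyC) (homz P a s) / (to_kappa q \o polyC) s ^+ (size P).-1.
Proof.
move=> lo hs hX.
have s0 : (to_kappa q \o polyC) s != 0 by rewrite psi_eq0.
have E : (map_poly (to_kappa q \o polyC) P).[(to_kappa q \o polyC) a / (to_kappa q \o polyC) s]
   * (to_kappa q \o polyC) s ^+ (size P).-1 = (to_kappa q \o polyC) (homz P a s) := homzE P a s0.
rewrite phiq_eval hX.
have sd0 : (to_kappa q \o polyC) s ^+ (size P).-1 != 0 by rewrite expf_neq0.
apply: (mulIf sd0); rewrite divfK //; exact: E.
Qed.

Lemma triv_ext (q : prime_idealr {poly A}) (a s : A) :
  lies_over q p -> s \notin p ->
  to_kappa q 'X = (to_kappa q \o polyC) a / (to_kappa q \o polyC) s ->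
  trivial_residue_ext q p.
Proof.
move=> lo hs hX z.
have [P1' [P2' [hP2 ->]]] := kappa_repr z.
have s0 : (to_kappa q \o polyC) s != 0 by rewrite psi_eq0.
have h20 : homz P2' a s \notin p.
  rewrite -(psi_eq0 _ lo); move: hP2; rewrite -to_kappa_eq0 (phiq_homz _ lo hs hX).
  by apply: contra => /eqP ->; rewrite mul0r.
exists (homz P1' a s * s ^+ (size P2').-1), (homz P2' a s * s ^+ (size P1').-1).
split; first by apply: prime_notin_mul => //; exact: prime_notin_exp.
rewrite (phiq_homz P1' lo hs hX) (phiq_homz P2' lo hs hX).
rewrite !rmorphM !rmorphXn /=.
rewrite invf_div !mulf_div. rewrite [_ ^+ (size P1').-1 * _]mulrC. done.
Qed.

Lemma Rel_P1 : Rel F p <-> P1.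
Proof.
split.
  move=> [q [Fq lo tr]].
  have [a [s [hs hX]]] := tr (to_kappa q 'X).
  exists a, s; split => //.
  rewrite -(psi_eq0 _ lo).
  have s0 : (to_kappa q \o polyC) s != 0 by rewrite psi_eq0.
  have := phiq_homz F lo hs hX; move: Fq; rewrite -to_kappa_eq0 => /eqP -> /eqP.
  rewrite eq_sym mulf_eq0 invr_eq0 expf_eq0 (negPf s0) andbF orbF //.
move=> [a [s [hs hh]]].
have s0 : to_kappa p s != 0 by rewrite to_kappa_eq0.
pose x := to_kappa p a / to_kappa p s.
have cfu : commr_rmorph (to_kappa p) x by move=> c; exact: mulrC.
pose ev : {rmorphism {poly A} -> kappa p} := horner_morph cfu.
pose q := mkprime (ker_props ev).
have qE P : (P \in q) = `[< ev P = 0 >] by [].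
have lo : lies_over q p.
  move=> c; rewrite qE /ev /= horner_morphC; apply/asboolP/idP.
    by move/eqP; rewrite to_kappa_eq0.
  by rewrite -to_kappa_eq0 => /eqP.
have hXq : s%:P * 'X - a%:P \in q.
  rewrite qE; apply/asboolP.
  rewrite rmorphB rmorphM /ev /= horner_morphC horner_morphX horner_morphC.
  by rewrite /x mulrC divfK // subrr.
exists q; split => //.
  rewrite qE; apply/asboolP; rewrite /ev /= /horner_morph.
  have E : (map_poly (to_kappa p) F).[to_kappa p a / to_kappa p s] * to_kappa p s ^+ (size F).-1
     = to_kappa p (homz F a s) := homzE F a s0.
  move: hh; rewrite -to_kappa_eq0 -E => /eqP.
  by move/eqP; rewrite mulf_eq0 expf_eq0 (negPf s0) andbF orbF => /eqP.
apply: (triv_ext lo hs).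
have s0' : (to_kappa q \o polyC) s != 0 by rewrite psi_eq0.
move: hXq; rewrite -to_kappa_eq0 rmorphB rmorphM subr_eq0 => /eqP E.
apply: (mulIf s0'); rewrite divfK // mulrC; exact: E.
Qed.
End Part1.

Lemma Zavoid (R : comNzRingType) (N w : R) :
  (forall c k, N * c <> w ^+ k) ->
  exists M : R -> Prop, [/\ (forall x y, M x -> M y -> M (x + y)),
     (forall r x, M x -> M (r * x)), M N, (forall k, ~ M (w ^+ k)) &
     (forall x y, M (x * y) -> M x \/ M y)].
Proof.
move=> hNw.
pose OK (X : R -> Prop) := [/\ (forall x y, X x -> X y -> X (x + y)),
   (forall r x, X x -> X (r * x)), X N & (forall k, ~ X (w ^+ k))].
pose P (X : R -> Prop) := (exists x, X x) -> OK X.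
have [M [PM Mmax]] : exists M, P M /\ forall B, classical_sets.proper M B -> ~ P B.
  apply: classical_sets.Zorn_bigcup => F0 FP Ftot [x [X FX Xx]].
  have OKof Y : F0 Y -> forall y, Y y -> OK Y := fun FY y Yy => FP Y FY (ex_intro _ y Yy).
  split.
  - move=> a b [Y FY Ya] [Z FZ Zb].
    case: (Ftot Y Z FY FZ) => [YZ|ZY].
      have [hD _ _ _] := OKof Z FZ b Zb; exists Z => //; apply: hD => //; exact: YZ.
    have [hD _ _ _] := OKof Y FY a Ya; exists Y => //; apply: hD => //; exact: ZY.
  - by move=> r a [Y FY Ya]; have [_ hM _ _] := OKof Y FY a Ya; exists Y => //; exact: hM.
  - by have [_ _ hN _] := OKof X FX x Xx; exists X.
  - by move=> k [Y FY Yk]; have [_ _ _ hk] := OKof Y FY _ Yk; exact: hk k Yk.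
have Mne : exists x, M x.
  case: (pselect (exists x, M x)) => // hne; exfalso.
  pose B := fun y => exists c, y = N * c.
  apply: (Mmax B).
    split; first by move=> t Mt; exfalso; apply: hne; exists t.
    by move=> BM; apply: hne; exists N; apply: BM; exists 1; rewrite mulr1.
  move=> _; split.
  - by move=> a b [c1 ->] [c2 ->]; exists (c1 + c2); rewrite mulrDr.
  - by move=> r a [c ->]; exists (r * c); rewrite mulrCA.
  - by exists 1; rewrite mulr1.
  - by move=> k [c E]; apply: (hNw c k); rewrite E.
have [MD MM MN Mw] := PM Mne.
have M0 : M 0 by rewrite -(mul0r N); exact: MM.
have ext z : ~ M z -> exists k m r, M m /\ w ^+ k = m + r * z.
  move=> nz; pose B := fun t => exists m r, M m /\ t = m + r * z.
  case: (pselect (exists k, B (w ^+ k))) => [[k [m [r [hm e]]]]|nk]; first by exists k, m, r.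
  exfalso; apply: (Mmax B).
    split; first by move=> t Mt; exists t, 0; rewrite mul0r addr0.
    move=> BM; apply: nz; apply: BM; exists 0, 1; split => //; by rewrite add0r mul1r.
  move=> _; split.
  - move=> a b [m1 [r1 [h1 ->]]] [m2 [r2 [h2 ->]]]; exists (m1 + m2), (r1 + r2).
    by split; [exact: MD | rewrite mulrDl addrACA].
  - move=> r a [m1 [r1 [h1 ->]]]; exists (r * m1), (r * r1).
    by split; [exact: MM | rewrite mulrDr mulrA].
  - by exists N, 0; split => //; rewrite mul0r addr0.
  - by move=> k Bk; apply: nk; exists k.
exists M; split => // x y Mxy.
case: (pselect (M x)) => [|nx]; first by left.
case: (pselect (M y)) => [|ny]; first by right.
exfalso.
have [i [m1 [r1 [h1 e1]]]] := ext x nx.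
have [j [m2 [r2 [h2 e2]]]] := ext y ny.
apply: (Mw (i + j)%N).
have -> : w ^+ (i + j) = (m2 + r2 * y) * m1 + (r1 * x) * m2 + (r1 * r2) * (x * y).
  by rewrite exprD e1 e2; ring.
exact: (MD _ _ (MD _ _ (MM _ _ h1) (MM _ _ h2)) (MM _ _ Mxy)).
Qed.

Lemma prime_avoid (R : comNzRingType) (N w : R) :
  (forall c k, N * c <> w ^+ k) ->
  exists p : prime_idealr R, N \in p /\ forall k, w ^+ k \notin p.
Proof.
move=> /Zavoid [M [MD MM MN Mw MP]].
have h : ideal_props M.
  split => //.
  - by rewrite -(mul0r N); exact: MM.
  - by rewrite -(expr0 w); exact: Mw.
exists (mkprime h); split; first by rewrite mkprimeE; apply/asboolP.
by move=> k; rewrite mkprimeE; apply/asboolPn; exact: Mw.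
Qed.

Section Part2.
Variables (A : idomainType) (F : {poly A}).

Lemma part1iii (p : prime_idealr A) : Rel F p <-> exists g : A, g \notin p /\
           exists b : {fraction A}, in_loc g b /\ in_pAp p (evalK F b).
Proof. exact: (iff_trans (Rel_P1 F p) (P1_iii F p)). Qed.

Definition ii2 := forall g : A, g != 0 ->
        exists (u : A) (b : {fraction A}),
          in_loc (u * g) b /\ ~ loc_unit (u * g) (evalK F b).
Definition iii2 := forall g : A, g != 0 ->
        exists (u : A) (b : {fraction A}) (p : prime_idealr A),
          [/\ in_loc (u * g) b, u * g \notin p & in_pAp p (evalK F b)].

Lemma zero_props : ideal_props (fun x : A => x = 0).
Proof.
split => //.
- by apply/eqP; exact: oner_neq0.
- by move=> x y -> ->; rewrite addr0.
- by move=> a x ->; rewrite mulr0.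
- by move=> x y /eqP; rewrite mulf_eq0 => /orP [] /eqP; [left|right].
Qed.

Lemma iii_dense : iii2 -> zdense (Rel F).
Proof.
move=> h E [p0 [e [Ee he]]]; have e0 := notin_neq0 he.
have [u [b [p [hb hup hF]]]] := h e e0.
exists p; split.
  exists e; split => //; apply: contra hup => hp; exact: idealMr.
by apply/part1iii; exists (u * e); split => //; exists b.
Qed.

Lemma dense_iii : zdense (Rel F) -> iii2.
Proof.
move=> hd g g0.
pose p0 := mkprime zero_props.
have gp0 : g \notin p0 by rewrite mkprimeE; apply/asboolPn => /eqP; apply/negP.
have [p [[e [eg hg]] hR]] := hd (fun e => e = g) (ex_intro _ p0 (ex_intro _ g (conj erefl gp0))).
subst e.
have [g' [hg' [b [[g'0 [a [n bE]]] hF]]]] := (part1iii p).1 hR.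
exists g', b, p; split => //; last exact: prime_notin_mul.
split; first by rewrite mulf_neq0.
exists (a * g ^+ n), n.
rewrite bE exprMn !tofracM invfM mulrACA divff ?mulr1 //.
by rewrite tofrac_eq0 expf_neq0.
Qed.

Lemma iii_ii : iii2 -> ii2.
Proof.
move=> h g g0; have [u [b [p [hb hup hF]]]] := h g g0; exists u, b; split => //.
move=> [_ [y [[_ [c [m yE]]] hy]]].
move: hF => [a [t [ha ht hE]]].
rewrite hE yE in hy.
have tm : t * (u * g) ^+ m \notin p by apply: prime_notin_mul => //; exact: prime_notin_exp.
have tm0 : (t * (u * g) ^+ m)%:F != 0 :> {fraction A} by rewrite tofrac_eq0 (notin_neq0 tm).
move: hy; rewrite mulf_div -tofracM -tofracM => hy.
have E0 : (a * c)%:F = (t * (u * g) ^+ m)%:F :> {fraction A}.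
  by rewrite -[LHS](divfK tm0) hy mul1r.
move/eqP: E0; rewrite tofrac_eq => /eqP E.
by move: tm; rewrite -E mulrC idealMr.
Qed.

Lemma ii_iii : ii2 -> iii2.
Proof.
move=> h g g0; have [u [b [[w0 [a [n bE]]] hnu]]] := h g g0.
move: w0 hnu bE; set w := u * g => w0 hnu bE.
have s0 : w ^+ n != 0 by rewrite expf_neq0.
set N := homz F a (w ^+ n).
have hev : evalK F b = N%:F / (w ^+ (n * (size F).-1))%:F by rewrite bE evalK_homz // exprM.
have hNw : forall c k, N * c <> w ^+ k.
  move=> c k E; apply: hnu; split.
    by split => //; exists N, (n * (size F).-1)%N.
  exists ((c * w ^+ (n * (size F).-1))%:F / (w ^+ k)%:F); split.
    by split => //; exists (c * w ^+ (n * (size F).-1)), k.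
  rewrite hev mulf_div -!tofracM mulrA E [w ^+ k * _]mulrC divff //.
  by rewrite tofrac_eq0 mulf_neq0 // expf_neq0.
have [p [Np hp]] := prime_avoid hNw.
have wp : w \notin p by rewrite -(expr1 w).
exists u, b, p; split => //.
  by split => //; exists a, n.
rewrite hev; exists N, (w ^+ (n * (size F).-1)); split => //.
Qed.
End Part2.

Theorem mainTheorem8 (A : idomainType) (F : {poly A}) (hF : (1 < size F)%N) :
  (forall p : prime_idealr A,
      (Rel F p <-> res_has_root F p) /\
      (res_has_root F p <->
         exists g : A, g \notin p /\
           exists b : {fraction A}, in_loc g b /\ in_pAp p (evalK F b)))
  /\
  (zdense (Rel F) <->
     (forall g : A, g != 0 ->
        exists (u : A) (b : {fraction A}),
          in_loc (u * g) b /\ ~ loc_unit (u * g) (evalK F b)))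
  /\
  ((forall g : A, g != 0 ->
        exists (u : A) (b : {fraction A}),
          in_loc (u * g) b /\ ~ loc_unit (u * g) (evalK F b))
   <->
   (forall g : A, g != 0 ->
        exists (u : A) (b : {fraction A}) (p : prime_idealr A),
          [/\ in_loc (u * g) b, u * g \notin p & in_pAp p (evalK F b)])).
Proof.
split.
  move=> p; split.
    exact: (iff_trans (Rel_P1 F p) (iff_sym (root_P1 F p))).
  exact: (iff_trans (root_P1 F p) (P1_iii F p)).
split.
  split; first by move/dense_iii/iii_ii.
  by move/ii_iii/iii_dense.
split; [exact: ii_iii | exact: iii_ii].
Qed.
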